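(* Let $F$ be analytic in the unit disk $\mathbb{D}$. If $F f \in \mathcal{P}$ for every $f \in \mathcal{P}$ (that is, the weighted composition transformation $T_{F,\varphi}$ with $\varphi(z)=z$ preserves $\mathcal{P}$), then $F \equiv 1$.
   Context: $\mathbb{D}$ is the open unit disk. $\mathcal{P}$ (the Carathéodory class) is the set of all analytic functions $f$ on $\mathbb{D}$ with $\mathrm{Re}\, f>0$ on $\mathbb{D}$ and $f(0)=1$. For $F$ analytic in $\mathbb{D}$ and $\varphi$ an analytic self-map of $\mathbb{D}$, $T_{F,\varphi}(f)=F\cdot(f\circ\varphi)$; it preserves $\mathcal{P}$ if $T_{F,\varphi}(f)\in\mathcal{P}$ for all $f\in\mathcal{P}$. *)

(* Defs.v *)
From Stdlib Require Import Reals.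
From Coquelicot Require Import Coquelicot.
Open Scope R_scope.

Definition unit_disk (z : C) : Prop := Cmod z < 1.

Definition analytic_on_disk (f : C -> C) : Prop :=
  forall z, unit_disk z -> @ex_derive C_AbsRing C_NormedModule f z.

Definition caratheodory (f : C -> C) : Prop :=
  analytic_on_disk f /\
  (forall z, unit_disk z -> 0 < Re (f z)) /\
  f (RtoC 0) = RtoC 1.

Definition wcomp (F phi f : C -> C) : C -> C := fun z => Cmult (F z) (f (phi z)).

Definition preserves_P (F phi : C -> C) : Prop :=
  forall f, caratheodory f -> caratheodory (wcomp F phi f).

(* Main.v *)
Require Import Defs.
From Stdlib Require Import Reals Lra Lia ZArith.
From Coquelicot Require Import Coquelicot.
Open Scope R_scope.
Lemma deriv_eps (F : C -> C) z l : @is_derive C_AbsRing C_NormedModule F z l ->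
  forall eps : posreal, exists d : posreal, forall h : C, Cmod h < d ->
   Cmod (F (z + h) - F z - h * l)%C <= eps * Cmod h.
Proof.
intros [_ Hd] eps.
specialize (Hd z (fun P H => H) eps).
destruct Hd as [d Hd]. exists d. intros h Hh.
specialize (Hd (z+h)%C).
assert (E : minus (z+h)%C z = h).
{ unfold minus, plus, opp; simpl. ring. }
unfold ball in Hd; simpl in Hd. unfold AbsRing_ball in Hd.
idtac.
unfold minus, plus, opp, scal in Hd; simpl in Hd. unfold mult in Hd; simpl in Hd.
replace (F (z + h) - F z - h * l)%C with (F (z + h) + - F z + - (h * l))%C by ring.
idtac.
replace (z + h + - z)%C with h in Hd by ring.
exact (Hd Hh).
Qed.
Lemma arch r : exists n, r < INR n.
Proof.
destruct (archimed r) as [H _].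
destruct (Z_lt_le_dec (up r) 0) as [Hz|Hz].
- exists 0%nat. simpl. apply IZR_lt in Hz. lra.
- exists (Z.to_nat (up r)). rewrite INR_IZR_INZ, Z2Nat.id by lia. lra.
Qed.
Lemma pow4 m : INR m <= 4 ^ m.
Proof. induction m. simpl; lra. rewrite S_INR. simpl. assert (1 <= 4^m) by (apply pow_R1_Rle; lra). lra. Qed.
Lemma sq_real (a0 b0 : R) :
  (forall m, 0 < fst (Nat.iter m (fun p => (fst p * fst p - snd p * snd p, 2 * fst p * snd p)) (a0, b0))) ->
  b0 = 0.
Proof.
intros H.
set (s := fun m => Nat.iter m (fun p => (fst p * fst p - snd p * snd p, 2 * fst p * snd p)) (a0, b0)).
assert (Ht : forall m, 4 ^ m * (b0 * b0 / (a0 * a0)) <= snd (s m) * snd (s m) / (fst (s m) * fst (s m))).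
{ induction m.
  - simpl. lra.
  - change (s (S m)) with (fst (s m) * fst (s m) - snd (s m) * snd (s m), 2 * fst (s m) * snd (s m)).
    simpl fst; simpl snd.
    pose proof (H m) as Ha. pose proof (H (S m)) as Hb. fold s in Ha, Hb.
    change (s (S m)) with (fst (s m) * fst (s m) - snd (s m) * snd (s m), 2 * fst (s m) * snd (s m)) in Hb.
    simpl fst in Hb.
    set (a := fst (s m)) in *. set (b := snd (s m)) in *.
    simpl pow.
    assert (Hd : 0 < a*a - b*b) by exact Hb.
    assert (Hapos : 0 < a*a) by nra.
    apply Rle_trans with (4 * (b * b / (a * a))).
    { rewrite Rmult_assoc. apply Rmult_le_compat_l; lra. }
    assert (E : 2 * a * b * (2 * a * b) / ((a * a - b * b) * (a * a - b * b)) = 4 * ((b*b) * ((a*a) / ((a * a - b * b) * (a * a - b * b))))) by (field; lra).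
    rewrite E.
    assert (HD : 0 < (a * a - b * b) * (a * a - b * b)) by nra.
    apply Rmult_le_compat_l. lra.
    unfold Rdiv. apply Rmult_le_compat_l. nra.
    apply Rmult_le_reg_l with (a*a). lra.
    rewrite Rinv_r by lra.
    apply Rmult_le_reg_l with ((a * a - b * b) * (a * a - b * b)). lra.
    replace ((a * a - b * b) * (a * a - b * b) * (a * a * (a * a * / ((a * a - b * b) * (a * a - b * b)))))
      with (a*a*(a*a)) by (field; lra). nra. }
assert (Hl : forall m, snd (s m) * snd (s m) / (fst (s m) * fst (s m)) < 1).
{ intros m. pose proof (H m) as Ha. pose proof (H (S m)) as Hb. fold s in Ha, Hb.
  change (s (S m)) with (fst (s m) * fst (s m) - snd (s m) * snd (s m), 2 * fst (s m) * snd (s m)) in Hb.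
  simpl fst in Hb. set (a := fst (s m)) in *. set (b := snd (s m)) in *.
  assert (Hd : 0 < a*a - b*b) by exact Hb.
  apply Rmult_lt_reg_r with (a * a). nra.
  unfold Rdiv. rewrite Rmult_assoc, Rinv_l by nra. lra. }
pose proof (H 0%nat) as H0. simpl in H0.
destruct (Req_dec b0 0) as [|Hb]; auto. exfalso.
set (t := b0 * b0 / (a0 * a0)).
assert (tpos : 0 < t). { unfold t. apply Rdiv_lt_0_compat; nra. }
destruct (arch (/ t)) as [n Hn].
specialize (Ht n). specialize (Hl n). pose proof (pow4 n).
assert (INR n * t < 1). { fold t in Ht. nra. }
apply Rmult_lt_compat_r with (r := t) in Hn; auto. rewrite Rinv_l in Hn; lra.
Qed.

Fixpoint Fp (F : C -> C) (n : nat) (z : C) : C :=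
  match n with O => RtoC 1 | S n => Cmult (F z) (Fp F n z) end.

Lemma Fp_add F a b z : Fp F (a + b) z = Cmult (Fp F a z) (Fp F b z).
Proof. induction a; simpl. ring. rewrite IHa. ring. Qed.

Lemma Fp_car F : preserves_P F (fun z => z) -> forall n, caratheodory (Fp F n).
Proof.
intros HP n. induction n.
- split; [|split].
  + intros z _. apply ex_derive_const.
  + intros z _. simpl. lra.
  + reflexivity.
- exact (HP _ IHn).
Qed.

Lemma Im_le_Cmod c : Rabs (Im c) <= Cmod c.
Proof.
destruct c as [x y]. unfold Cmod; simpl.
rewrite <- sqrt_Rsqr_abs. apply sqrt_le_1_alt. unfold Rsqr. nra.
Qed.

Lemma real_F F z : preserves_P F (fun z => z) -> unit_disk z -> Im (F z) = 0.
Proof.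
intros HP Hz.
apply (sq_real (Re (F z))).
intros m.
assert (E : exists n, Nat.iter m (fun p => (fst p * fst p - snd p * snd p, 2 * fst p * snd p)) (Re (F z), Im (F z)) = (Re (Fp F n z), Im (Fp F n z))).
{ induction m.
  - exists 1%nat. simpl Nat.iter. unfold Fp. destruct (F z) as [x y]. simpl. f_equal; ring.
  - destruct IHm as [n Hn]. exists (n + n)%nat. simpl Nat.iter. rewrite Hn, Fp_add.
    destruct (Fp F n z) as [x y]. simpl. f_equal; ring. }
destruct E as [n ->]. simpl fst.
destruct (Fp_car F HP n) as [_ [H _]]. auto.
Qed.

Lemma Im_expr (a b c : C) : Im (a - b - c)%C = Im a - Im b - Im c.
Proof. destruct a, b, c; simpl; ring. Qed.
Lemma Re_expr (a b : C) : Re (a - b)%C = Re a - Re b.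
Proof. destruct a, b; simpl; ring. Qed.

Lemma small_zero x : (forall eps : posreal, Rabs x <= eps) -> x = 0.
Proof.
intros H. destruct (Req_dec x 0) as [|Hx]; auto.
assert (Hp : 0 < Rabs x / 2) by (apply Rabs_pos_lt in Hx; lra).
specialize (H (mkposreal _ Hp)). simpl in H. apply Rabs_pos_lt in Hx. lra.
Qed.

Lemma deriv_zero F z l : (forall w, unit_disk w -> Im (F w) = 0) -> unit_disk z ->
  @is_derive C_AbsRing C_NormedModule F z l -> l = RtoC 0.
Proof.
intros HI Hz Hd.
assert (Hb : forall eps : posreal, Rabs (Re l) <= eps /\ Rabs (Im l) <= eps).
{ intros eps. destruct (deriv_eps F z l Hd eps) as [d Hd'].
  unfold unit_disk in Hz.
  set (r := Rmin d (1 - Cmod z) / 2).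
  assert (Hr : 0 < r). { unfold r.
     assert (0 < Rmin d (1 - Cmod z)) by (apply Rmin_pos; [apply cond_pos|lra]). lra. }
  assert (Hrd : r < d). { unfold r. pose proof (Rmin_l d (1 - Cmod z)). pose proof (cond_pos d). lra. }
  assert (Hr1 : Cmod z + r < 1). { unfold r. pose proof (Rmin_r d (1 - Cmod z)). lra. }
  assert (key : forall h : C, Cmod h = r -> Rabs (Im (h * l)%C) <= eps * r).
  { intros h Hh.
    assert (Hin : unit_disk (z + h)%C).
    { unfold unit_disk. pose proof (Cmod_triangle z h). lra. }
    specialize (Hd' h ltac:(lra)).
    pose proof (Im_le_Cmod (F (z + h) - F z - h * l)%C) as H1.
    rewrite Im_expr, (HI _ Hin), (HI _ Hz) in H1.
    replace (0 - 0 - Im (h * l)%C) with (- Im (h*l)%C) in H1 by ring.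
    rewrite Rabs_Ropp in H1. rewrite <- Hh. lra. }
  assert (C1 : Cmod (RtoC r) = r) by (rewrite Cmod_R; apply Rabs_pos_eq; lra).
  assert (C2 : Cmod (0, r) = r).
  { unfold Cmod; simpl. replace (0 * (0 * 1) + r * (r * 1)) with (r*r) by ring. apply sqrt_square; lra. }
  pose proof (key _ C1) as K1. pose proof (key _ C2) as K2.
  destruct l as [a b]. simpl in K1, K2. simpl Re; simpl Im.
  replace (r * b + 0 * a) with (r * b) in K1 by ring.
  replace (0 * b + r * a) with (r * a) in K2 by ring.
  rewrite Rabs_mult, Rabs_pos_eq in K1, K2 by lra.
  split; apply Rmult_le_reg_l with r; lra. }
destruct l as [a b]. unfold RtoC. f_equal; apply small_zero; intros eps; apply (Hb eps).
Qed.

Lemma const_F F w : analytic_on_disk F -> (forall w, unit_disk w -> Im (F w) = 0) ->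
  unit_disk w -> Re (F w) = Re (F (RtoC 0)).
Proof.
intros HA HI Hw.
set (g := fun t : R => Re (F (Cmult (RtoC t) w))).
assert (Hg : forall t, 0 <= t <= 1 -> is_derive g t 0).
{ intros t Ht. apply is_derive_Reals. intros eps Heps.
  set (p := Cmult (RtoC t) w).
  unfold unit_disk in Hw.
  assert (Hp : unit_disk p).
  { unfold unit_disk, p. rewrite Cmod_mult, Cmod_R, Rabs_pos_eq by lra.
    pose proof (Cmod_ge_0 w). nra. }
  destruct (HA p Hp) as [l Hl].
  pose proof (deriv_zero F p l HI Hp Hl) as Hl0. subst l.
  assert (He2 : 0 < eps / 2) by lra.
  destruct (deriv_eps F p _ Hl (mkposreal _ He2)) as [d Hd].
  assert (Hdel : 0 < d / (Cmod w + 1)).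
  { apply Rdiv_lt_0_compat. apply cond_pos. pose proof (Cmod_ge_0 w). lra. }
  exists (mkposreal _ Hdel). simpl. intros h Hh0 Hh.
  pose proof (Cmod_ge_0 w) as Hw0.
  assert (Hhw : Cmod (RtoC h * w) < d).
  { rewrite Cmod_mult, Cmod_R.
    apply Rmult_lt_compat_r with (r := Cmod w + 1) in Hh; [|lra].
    unfold Rdiv in Hh. rewrite Rmult_assoc, Rinv_l in Hh by lra.
    pose proof (Rabs_pos h). nra. }
  specialize (Hd _ Hhw). simpl in Hd.
  unfold g. rewrite RtoC_plus, Cmult_plus_distr_r. fold p.
  replace (F (p + RtoC h * w)%C - F p - RtoC h * w * RtoC 0)%C with (F (p + RtoC h * w)%C - F p)%C in Hd.
  2:{ destruct (F (p + RtoC h * w)%C) as [x1 y1], (F p) as [x2 y2], (RtoC h * w)%C as [x3 y3]; unfold Cminus, Cplus, Copp, Cmult, RtoC; simpl. f_equal; ring. }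
  pose proof (re_le_Cmod (F (p + RtoC h * w)%C - F p)%C) as H1.
  rewrite Re_expr in H1.
  rewrite Cmod_mult, Cmod_R in Hd.
  rewrite Rminus_0_r. unfold Rdiv. rewrite Rabs_mult, Rabs_inv.
  apply Rabs_pos_lt in Hh0.
  apply Rmult_lt_reg_r with (Rabs h). lra.
  rewrite Rmult_assoc, Rinv_l by lra. rewrite Rmult_1_r. assert (0 < eps * Rabs h) by (apply Rmult_lt_0_compat; lra). assert (eps / 2 * (Rabs h * Cmod w) < eps * Rabs h) by nra. lra. }
pose proof (eq_is_derive g 0 1 Hg ltac:(lra)) as E.
unfold g in E. rewrite Cmult_0_l, Cmult_1_l in E. symmetry; exact E.
Qed.

Theorem proposition2p1 (F : C -> C) :
  analytic_on_disk F ->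
  preserves_P F (fun z => z) ->
  forall z, unit_disk z -> F z = RtoC 1.
Proof.
intros HA HP z Hz.
assert (HI : forall w, unit_disk w -> Im (F w) = 0) by (intros; apply real_F; auto).
assert (H0 : unit_disk (RtoC 0)) by (unfold unit_disk; rewrite Cmod_0; lra).
assert (F0 : F (RtoC 0) = RtoC 1).
{ destruct (Fp_car F HP 1) as [_ [_ E]]. simpl in E. rewrite Cmult_1_r in E. exact E. }
pose proof (const_F F z HA HI Hz) as E. rewrite F0 in E.
pose proof (HI z Hz) as E2.
destruct (F z) as [a b]. simpl in E, E2. unfold RtoC. subst. reflexivity.
Qed.
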